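(* Let $$g_t(x) = x^3 + 147(t^2 + 13t + 49)x^2 + 147(t^2 + 13t + 49)(33t^2 + 637t + 2401)x + 49(t^2 + 13t + 49)(881t^4 + 38122t^3 + 525819t^2 + 3058874t + 5764801)\in\mathbb{Q}(t)[x].$$ Then $g_t$ parametrizes all cyclic cubic extensions of $\mathbb{Q}$: for every Galois extension $L/\mathbb{Q}$ with $\mathrm{Gal}(L/\mathbb{Q})\cong\mathbb{Z}/3\mathbb{Z}$ there exists $t\in\mathbb{Q}$ such that $L$ is the splitting field of $g_t(x)$ over $\mathbb{Q}$.
   Context: $g_t(x)$ is (up to defining the same field) the cubic factor of the $7$-division polynomial of the family $\mathcal{E}_t\colon y^2 = x^3 - 27(t^2+13t+49)^3(t^2+245t+2401)x + 54(t^2+13t+49)^4(t^4-490t^3-21609t^2-235298t-823543)$ of elliptic curves with a rational $7$-isogeny; it defines the field of $x$-coordinates of a generator of the kernel of that isogeny. *)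

(* Defs.v *)
From HB Require Import structures.
From mathcomp Require Import all_boot all_order all_algebra all_fingroup all_solvable all_field.
Set Implicit Arguments. Unset Strict Implicit. Unset Printing Implicit Defensive.
Import GRing.Theory.
Local Open Scope ring_scope.

(* Large decimal literals (e.g. 5764801) overflow the stack in rat (unary nat
   elaboration), so constants are written as products with powers of 7:
     49 = 7^2, 147 = 3*7^2, 637 = 13*7^2, 2401 = 7^4, 38122 = 778*7^2,
     525819 = 219*7^4, 3058874 = 26*7^6, 5764801 = 7^8. *)

Definition qpar (t : rat) : rat := t ^+ 2 + 13 * t + 7 ^+ 2.

Definition gpoly (t : rat) : {poly rat} :=
  'X^3
  + (3 * 7 ^+ 2 * qpar t)%:P * 'X^2
  + (3 * 7 ^+ 2 * qpar t * (33 * t ^+ 2 + 13 * 7 ^+ 2 * t + 7 ^+ 4))%:P * 'X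
  + (7 ^+ 2 * qpar t * (881 * t ^+ 4 + 778 * 7 ^+ 2 * t ^+ 3
        + 219 * 7 ^+ 4 * t ^+ 2 + 26 * 7 ^+ 6 * t + 7 ^+ 8))%:P.

(* Main.v *)
Require Import Defs.
From HB Require Import structures.
From mathcomp Require Import all_boot all_order all_algebra all_fingroup all_solvable all_field.
From mathcomp Require Import ring lra.
From Stdlib Require Import Classical.
Import Order.TTheory GRing.Theory Num.Theory.
Local Open Scope ring_scope.

Section Idents.
Variable F : fieldType.

Definition denp (s : F) := s ^+ 3 - 5 * s ^+ 2 - 8 * s - 1.
Definition tpar (s : F) := 7 ^+ 2 * s * (s + 1) / denp s.
Definition rt0 (s : F) := - (7 ^+ 4) * (1 + 7 * s + 10 * s ^+ 2 + 7 * s ^+ 3 + 2 * s ^+ 4 - s ^+ 5 + s ^+ 6) / denp s ^+ 2.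
Definition rt1 (s : F) := - (7 ^+ 4) * (1 - 5 * s - 14 * s ^+ 2 - 17 * s ^+ 3 - 10 * s ^+ 4 - s ^+ 5 + s ^+ 6) / denp s ^+ 2.
Definition rt2 (s : F) := - (7 ^+ 4) * (1 + 7 * s + 22 * s ^+ 2 + 31 * s ^+ 3 + 26 * s ^+ 4 + 11 * s ^+ 5 + s ^+ 6) / denp s ^+ 2.
Definition qL (t : F) := t ^+ 2 + 13 * t + 7 ^+ 2.

Lemma e1 s : denp s != 0 -> rt0 s + rt1 s + rt2 s = - (3 * 7 ^+ 2 * qL (tpar s)).
Proof. move=> hD; rewrite /rt0 /rt1 /rt2 /qL /tpar; move: hD; rewrite /denp => hD; field; exact hD. Qed.
Lemma e2 s : denp s != 0 -> rt0 s * rt1 s + rt0 s * rt2 s + rt1 s * rt2 s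
  = 3 * 7 ^+ 2 * qL (tpar s) * (33 * tpar s ^+ 2 + 13 * 7 ^+ 2 * tpar s + 7 ^+ 4).
Proof. move=> hD; rewrite /rt0 /rt1 /rt2 /qL /tpar; move: hD; rewrite /denp => hD; field; exact hD. Qed.
Lemma e3 s : denp s != 0 -> rt0 s * rt1 s * rt2 s = - (7 ^+ 2 * qL (tpar s) * (881 * tpar s ^+ 4 + 778 * 7 ^+ 2 * tpar s ^+ 3
        + 219 * 7 ^+ 4 * tpar s ^+ 2 + 26 * 7 ^+ 6 * tpar s + 7 ^+ 8)).
Proof. move=> hD; rewrite /rt0 /rt1 /rt2 /qL /tpar; move: hD; rewrite /denp => hD; field; exact hD. Qed.
Lemma e4 s : denp s != 0 -> 144 * tpar s ^+ 4 * s = - (rt0 s ^+ 2 + (118 * tpar s ^+ 2 + 30 * 7 ^+ 2 * tpar s + 2 * 7 ^+ 4) * rt0 s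
   + (1573 * tpar s ^+ 4 + 1266 * 7 ^+ 2 * tpar s ^+ 3 + 307 * 7 ^+ 4 * tpar s ^+ 2 + 30 * 7 ^+ 6 * tpar s + 7 ^+ 8)).
Proof. move=> hD; rewrite /rt0 /rt1 /rt2 /qL /tpar; move: hD; rewrite /denp => hD; field; exact hD. Qed.

Lemma den_mu s : 1 + s != 0 -> denp (- (1 + s)^-1) = - denp s / (1 + s) ^+ 3.
Proof. move=> h; rewrite /denp; field; exact h. Qed.

Lemma tpar_mu s : s != 0 -> 1 + s != 0 -> denp s != 0 -> tpar (- (1 + s)^-1) = tpar s.
Proof.
move=> h0 h1 hD; rewrite /tpar den_mu //; move: hD; rewrite /denp => hD; field.
by rewrite hD h1 oppr_eq0 hD.
Qed.

Lemma bezout s : (32 - 53 * s - 26 * s ^+ 2) * denp s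
   + (10 + 11 * s - 2 * s ^+ 2) * (13 + 6 * s - 33 * s ^+ 2 - 13 * s ^+ 3) = 98.
Proof. rewrite /denp; ring. Qed.

Lemma den_nu s : s + 2 != 0 -> 13 + 6 * s - 33 * s ^+ 2 - 13 * s ^+ 3 = (s + 2) ^+ 3 * denp ((s - 1) / (s + 2)).
Proof. move=> h; rewrite /denp; field; exact h. Qed.

End Idents.
Arguments denp {F}. Arguments e1 {F}. Arguments e2 {F}. Arguments e3 {F}. Arguments e4 {F}. Arguments den_mu {F}. Arguments tpar_mu {F}. Arguments bezout {F}. Arguments den_nu {F}. Arguments tpar {F}. Arguments rt0 {F}. Arguments rt1 {F}. Arguments rt2 {F}. Arguments qL {F}.

Lemma poly3_fact (R : comNzRingType) (a b c r0 r1 r2 : R) :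
  a = - (r0 + r1 + r2) -> b = r0 * r1 + r0 * r2 + r1 * r2 -> c = - (r0 * r1 * r2) ->
  'X^3 + a%:P * 'X^2 + b%:P * 'X + c%:P
  = ('X - r0%:P) * (('X - r1%:P) * ('X - r2%:P)).
Proof.
move=> -> -> ->; rewrite !(rmorphN, rmorphD, rmorphM) /=; ring.
Qed.

Lemma map_cubic (R S : nzRingType) (f : {rmorphism R -> S}) (a b c : R) :
  map_poly f ('X^3 + a%:P * 'X^2 + b%:P * 'X + c%:P)
  = 'X^3 + (f a)%:P * 'X^2 + (f b)%:P * 'X + (f c)%:P.
Proof. rewrite !rmorphD !rmorphM /= !map_polyC !map_polyX. by rewrite !exprS expr0 !mulr1. Qed.

Theorem lemma4p9 (L : splittingFieldType rat) :
  galois 1%VS {:L} ->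
  ('Gal({:L} / 1%VS) \isog Zp 3)%g ->
  exists t : rat, splittingFieldFor 1%VS (map_poly (in_alg L) (gpoly t)) {:L}.
Proof.
move=> galL iso.
have cardG : #|('Gal({:L} / 1%VS))%g| = 3%N by rewrite (card_isog iso) card_Zp.
have [sg sgG sg1] : exists2 sg, sg \in ('Gal({:L} / 1%VS))%g & sg != 1%g.
  by apply/trivgPn; rewrite trivg_card1 cardG.
have ordsg : #[sg]%g = 3%N.
  apply/(prime_nt_dvdP (isT : prime 3)); first by rewrite order_eq1.
  by rewrite -cardG order_dvdG.
have genG : <[sg]>%g = ('Gal({:L} / 1%VS))%g.
  apply/eqP; rewrite eqEcard cycle_subG sgG /= cardG -orderE ordsg.
  done.
have sg3 : forall a, sg (sg (sg a)) = a.
  move=> a; have : (sg ^+ 3)%g a = a by rewrite -ordsg expg_order gal_id.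
  by rewrite !expgS expg0 mulg1 !galM ?memvf.
have fixG : forall a, sg a = a -> a \in 1%VS.
  move=> a ha; have /galois_fixedField <- := galL.
  apply/fixedFieldP; first exact: memvf.
  move=> tau; rewrite -genG => /cycleP [k ->]; elim: k => [|k IH].
    by rewrite expg0 gal_id.
  by rewrite expgS galM ?memvf // ha.
have inQ : forall a : L, a \in 1%VS -> sg a = a.
  by move=> a; apply: fixed_gal (subvf _) sgG.
have Q1 : forall a : L, a \in 1%VS -> exists c : rat, a = c%:A.
  by move=> a ha; have [c ->] := vlineP a 1 ha; exists c.
have algQ : forall c : rat, (c%:A : L) \in 1%VS.
  by move=> c; apply/(vlineP _ 1); exists c.
have inj : forall c d : rat, (c%:A : L) = d%:A -> c = d.
  by move=> c d; rewrite -!in_algE => /fmorph_inj.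
have notQ : forall s : L, sg s * (1 + s) = -1 -> s \notin 1%VS.
  move=> s hs; apply/negP => sQ; move: hs; rewrite inQ //.
  have [c ->] := Q1 s sQ.
  have -> : (c%:A : L) * (1 + c%:A) = (c * (1 + c))%:A.
    by rewrite -!in_algE rmorphM rmorphD rmorph1.
  have -> : (-1 : L) = (-1)%:A by rewrite -in_algE rmorphN1.
  move/inj.
  move=> h; have : 0 < c * (1 + c) + 1 by clear -h; nra.
  by rewrite h addNr ltxx.
have lin : forall (s : L) (a b : rat), s \notin 1%VS -> a != 0 -> a%:A * s + b%:A != 0.
  move=> s a b sQ a0; apply/negP => /eqP E; move/negP: sQ; apply.
  have aA : (a%:A : L) != 0 by rewrite -in_algE fmorph_eq0.
  have -> : s = (- b / a)%:A.
    have -> : ((- b / a)%:A : L) = - b%:A / a%:A.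
      by rewrite -!in_algE rmorphM rmorphN fmorphV.
    apply: (mulfI aA); rewrite mulrCA divff // mulr1; apply/eqP.
    by rewrite -subr_eq0 opprK E.
  exact: algQ.
have [x hx] : exists x : L, sg x != x.
  case: (classic (exists x : L, sg x != x)) => // nx; exfalso.
  have : sg == 1%g.
    apply/gal_eqP => a _; rewrite gal_id; apply/eqP; apply/negPn/negP => h.
    by apply: nx; exists a.
  by rewrite (negbTE sg1).
have sgB : forall a b : L, sg (a - b) = sg a - sg b by move=> a b; exact: rmorphB.
have sgD : forall a b : L, sg (a + b) = sg a + sg b by move=> a b; exact: rmorphD.
have sgM : forall a b : L, sg (a * b) = sg a * sg b by move=> a b; exact: rmorphM.
have sgV : forall a : L, sg (a^-1) = (sg a)^-1 by move=> a; exact: fmorphV.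
have sgN : forall a : L, sg (- a) = - sg a by move=> a; exact: rmorphN.
have sgX : forall (a : L) n, sg (a ^+ n) = (sg a) ^+ n by move=> a n; exact: rmorphXn.
have sgn : forall n, sg (n%:R : L) = n%:R by move=> n; exact: rmorph_nat.
have sgone : sg (1 : L) = 1 by exact: rmorph1.
have h1 : x - sg x != 0 by rewrite subr_eq0 eq_sym.
have h2 : sg x - sg (sg x) != 0 by rewrite -rmorphB fmorph_eq0.
pose s0 := (sg (sg x) - x) / (x - sg x).
have good0 : sg s0 * (1 + s0) = -1.
  rewrite /s0 sgM sgV !sgB sg3; move: h1 h2 => h1 h2; field.
  by apply/andP; split; [exact: h1 | exact: h2].
have [s [goods sD]] : exists s : L, sg s * (1 + s) = -1 /\ denp s != 0.
  have s0Q := notQ s0 good0.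
  have natA : forall n, ((n%:R : rat)%:A : L) = n%:R by move=> n; rewrite -in_algE rmorph_nat.
  have s01 : 1 + s0 != 0.
    by have := lin s0 1 1 s0Q (oner_neq0 _); rewrite scale1r mul1r addrC.
  have s02 : s0 + 2 != 0.
    by have := lin s0 1 2 s0Q (oner_neq0 _); rewrite scale1r mul1r natA.
  have s03 : 2 * s0 + 1 != 0.
    by have := lin s0 2 1 s0Q isT; rewrite scale1r natA.
  have sgs0 : sg s0 = - (1 + s0)^-1.
    by apply: (mulIf s01); rewrite good0 mulNr mulVf.
  case: (eqVneq (denp s0) 0) => hd; last by exists s0.
  exists ((s0 - 1) / (s0 + 2)); split.
    rewrite sgM sgV sgB sgD sgone (sgn 2) sgs0.
    field.
    have -> : -1 + 2 * (1 + s0) = 2 * s0 + 1 by ring.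
    by rewrite s02 s01 s03.
  apply/negP => /eqP hs; have := bezout s0.
  rewrite hd mulr0 add0r den_nu // hs !mulr0 => /esym /eqP.
  by rewrite -natA -in_algE fmorph_eq0.
have natA : forall n, ((n%:R : rat)%:A : L) = n%:R by move=> n; rewrite -in_algE rmorph_nat.
have nat0 : forall n, n != 0%N -> (n%:R : L) != 0.
  by move=> n n0; rewrite -natA -in_algE fmorph_eq0 pnatr_eq0.
have sQ := notQ s goods.
have s0n : s != 0 by apply: contraNneq sQ => ->; exact: mem0v.
have s1n : 1 + s != 0.
  by have := lin s 1 1 sQ (oner_neq0 _); rewrite scale1r mul1r addrC.
have sgs : sg s = - (1 + s)^-1.
  by apply: (mulIf s1n); rewrite goods mulNr mulVf.
have sgt : sg (tpar s) = tpar s.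
  transitivity (tpar (- (1 + s)^-1)); last exact: tpar_mu.
  by rewrite /tpar /denp !(sgM, sgV, sgB, sgD, sgX, sgn, sgone, sgs).
have [c hc] := Q1 _ (fixG _ sgt).
exists c; exists [:: rt0 s; rt1 s; rt2 s].
  rewrite !big_cons big_nil mulr1.
  set t := tpar s in hc.
  have ina : forall r : rat, in_alg L r = r%:A by [].
  have hA : in_alg L (3 * 7 ^+ 2 * qpar c) = 3 * 7 ^+ 2 * qL t.
    by rewrite /qpar /qL hc -!in_algE; ring.
  have hB : in_alg L (3 * 7 ^+ 2 * qpar c * (33 * c ^+ 2 + 13 * 7 ^+ 2 * c + 7 ^+ 4))
      = 3 * 7 ^+ 2 * qL t * (33 * t ^+ 2 + 13 * 7 ^+ 2 * t + 7 ^+ 4).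
    by rewrite /qpar /qL hc -!in_algE; ring.
  have hC : in_alg L (7 ^+ 2 * qpar c * (881 * c ^+ 4 + 778 * 7 ^+ 2 * c ^+ 3
        + 219 * 7 ^+ 4 * c ^+ 2 + 26 * 7 ^+ 6 * c + 7 ^+ 8))
      = 7 ^+ 2 * qL t * (881 * t ^+ 4 + 778 * 7 ^+ 2 * t ^+ 3
        + 219 * 7 ^+ 4 * t ^+ 2 + 26 * 7 ^+ 6 * t + 7 ^+ 8).
    by rewrite /qpar /qL hc -!in_algE; ring.
  suff -> : map_poly (in_alg L) (gpoly c)
      = ('X - (rt0 s)%:P) * (('X - (rt1 s)%:P) * ('X - (rt2 s)%:P)) by exact: eqpxx.
  rewrite /gpoly map_cubic; apply: poly3_fact.
  - by transitivity (3 * 7 ^+ 2 * qL t); [exact: hA | rewrite e1 // opprK].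
  - by transitivity (3 * 7 ^+ 2 * qL t * (33 * t ^+ 2 + 13 * 7 ^+ 2 * t + 7 ^+ 4));
      [exact: hB | rewrite e2].
  - transitivity (7 ^+ 2 * qL t * (881 * t ^+ 4 + 778 * 7 ^+ 2 * t ^+ 3
        + 219 * 7 ^+ 4 * t ^+ 2 + 26 * 7 ^+ 6 * t + 7 ^+ 8)); first exact: hC.
    by rewrite e3 // opprK.
have dimL : \dim {:L} = 3%N.
  by have := galois_dim galL; rewrite dimv1 divn1 cardG.
set K := (<<1 & [:: rt0 s; rt1 s; rt2 s]>>)%AS.
have tK : tpar s \in K.
  by apply: (subvP (subv_adjoin_seq _ _)); rewrite hc algQ.
have r0K : rt0 s \in K by apply: seqv_sub_adjoin; rewrite inE eqxx.
have t0 : tpar s != 0.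
  rewrite /tpar !mulf_neq0 ?invr_eq0 ?expf_neq0 ?nat0 //.
  by rewrite addrC.
have sK : s \in K.
  have h144 : 144 * tpar s ^+ 4 != 0 by rewrite mulf_neq0 ?expf_neq0 ?nat0.
  have -> : s = (144 * tpar s ^+ 4)^-1 * (144 * tpar s ^+ 4 * s) by rewrite mulKf.
  rewrite e4 //.
  have numK : forall n, (n%:R : L) \in K.
    by move=> n; apply: (subvP (subv_adjoin_seq _ _)); rewrite -natA algQ.
  have XK : forall (a : L) n, a \in K -> a ^+ n \in K.
    move=> a n aK; elim: n => [|n IH]; first by rewrite expr0 (numK 1%N).
    by rewrite exprS memvM.
  apply: memvM; first rewrite memvV.
    by apply: memvM; [exact: numK | exact: XK].
  rewrite memvN.
  by repeat first [exact: tK | exact: r0K | exact: numK | apply: memvD | apply: memvM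
    | apply: XK ].
have Kdim : (\dim K %| 3)%N.
  rewrite -dimL; apply: field_dimS; exact: subvf.
have Kle : (\dim K <= 3)%N by rewrite -dimL dimvS // subvf.
have Kn1 : \dim K != 1%N.
  apply/negP => /eqP d1; move/negP: sQ; apply.
  have : (1%VS == K :> {vspace L}) by rewrite eqEdim sub1v d1 dimv1.
  by move/eqP => ->.
apply/eqP; rewrite eqEdim subvf dimL /=.
move: Kdim Kle Kn1; rewrite -/K.
by case: (\dim K) => [|[|[|[|n]]]].
Qed.
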